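(* Consider the CSMA scheduler described in the context, and assume time-scale separation, i.e. at the first slot $t=nT$ of every super slot $n\ge 0$ the link schedule produced by the scheduler is distributed according to the stationary distribution of the Markov chain it induces for the current (fixed) weights. Let $0<\theta,\delta<1$ and let $\Phi_3^*(t)=\max\Phi_3(t)$, the maximum being over all feasible $(x_i(t),\mu_{mi}(t))$. If $$\Phi_3^*(t)\geq \frac{1}{\theta}\Big(|\mathcal{E}|\log 2+\log\frac{1}{\delta}\Big),$$ then at any slot $t=nT$, $n\ge 0$, with probability greater than $1-\delta$ the scheduler produces a schedule $\mu_{mi}(t)$ with $$\Phi_3(t)\geq (1-\theta)\,\Phi_3^*(t).$$
   Context: Setting: link set $\mathcal{E}$, each link $i$ with interference set $\mathcal{C}_i$; job types $\mathcal{M}$ with sizes $s_m$, $s^{max}=\max_m s_m$; nonnegative queue values $Q_{mi}(t),Z_{mi}(t)$ for $m\in\mathcal{M},i\in\mathcal{E}$. A feasible decision is $x_i(t)\in\{0,1\}$ with $x_i(t)+x_j(t)\le 1$ for all $j\in\mathcal{C}_i$, and $\mu_{mi}(t)\in\{0,1\}$ with $\sum_m\mu_{mi}(t)=x_i(t)$. Define $\Phi_3(t)=\sum_{m\in\mathcal{M}}\sum_{i\in\mathcal{E}}\mu_{mi}(t)\,[Q_{mi}(t)+Z_{mi}(t)]$, link weights $w_i(t)=\max_m\{Q_{mi}(t)+Z_{mi}(t)\}$ and $p_i=e^{w_i(t)}/(1+e^{w_i(t)})$. CSMA scheduler: time is divided into super slots of $T\ge s^{max}$ slots. At $t=nT$: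 (control phase) each link $i$ picks $T_i$ uniformly from $\{0,\dots,W-1\}$ (mini-slots); if it hears an INTENT message from a link in $\mathcal{C}_i$ before mini-slot $T_i+1$ it sets $z_i(t)=0$, otherwise it broadcasts INTENT at mini-slot $T_i+1$ and sets $z_i(t)=1$ if no collision, $z_i(t)=0$ if collision. (Scheduling phase) if $z_i(t)=0$ then $x_i(t)=x_i(t-1)$; if $z_i(t)=1$ and some $j\in\mathcal{C}_i$ had $x_j(t-1)=1$ then $x_i(t)=0$; otherwise $x_i(t)=1$ with probability $p_i$ and $0$ with probability $1-p_i$. An active link serves (sets $\mu_{mi}=1$ for) a job type maximizing $Q_{mi}(t)+Z_{mi}(t)$. At $t=nT+\tau$, $0<\tau<T$: $x_i(t)=x_i(nT)$; an active link continues an unfinished job of its current type, otherwise starts a job of a type $m$ maximizing $Q_{mi}(t)+Z_{mi}(t)$ among those with $(n+1)T-t\ge s_m$. *)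

(* Defs.v *)
From mathcomp Require Import all_boot all_order all_algebra.
From mathcomp Require Import all_classical all_reals all_analysis.
Set Implicit Arguments. Unset Strict Implicit. Unset Printing Implicit Defensive.
Import Order.TTheory GRing.Theory Num.Theory.
Local Open Scope ring_scope.

(* Links: a finType E; interference sets: C i j  <=>  j \in C_i.
   Job types: a finType M.  Queue values Q Z : M -> E -> R. *)

Definition feasible_x (E : finType) (C : rel E) (x : {ffun E -> bool}) : bool :=
  [forall i, forall j, C i j ==> ~~ (x i && x j)].

Definition feasible (E M : finType) (C : rel E)
    (x : {ffun E -> bool}) (mu : {ffun M * E -> bool}) : bool :=
  feasible_x C x &&
  [forall i, (\sum_(m : M) (mu (m, i) : nat))%N == (x i : nat)].

Definition Phi3 (R : realType) (E M : finType) (Q Z : M -> E -> R)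
    (mu : {ffun M * E -> bool}) : R :=
  \sum_(m : M) \sum_(i : E) (mu (m, i))%:R * (Q m i + Z m i).

(* Phi_3^* : maximum of Phi_3 over all feasible (x, mu) (the all-zero
   decision is feasible and Phi_3 >= 0, so 0 is a harmless seed). *)
Definition Phi3star (R : realType) (E M : finType) (C : rel E)
    (Q Z : M -> E -> R) : R :=
  \big[Num.max/0]_(p : {ffun E -> bool} * {ffun M * E -> bool} |
                     feasible C p.1 p.2) Phi3 Q Z p.2.

Definition weight (R : realType) (E M : finType) (Q Z : M -> E -> R) (i : E) : R :=
  \big[Num.max/0]_(m : M) (Q m i + Z m i).

Definition pact (R : realType) (E M : finType) (Q Z : M -> E -> R) (i : E) : R :=
  expR (weight Q Z i) / (1 + expR (weight Q Z i)).

(* ---- control phase ----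
   b : {ffun E -> 'I_W} are the back-off values T_i.  Link i broadcasts
   INTENT (at mini-slot T_i + 1) iff it has not heard an INTENT from a link
   j in C_i that broadcast at an earlier mini-slot.  Defined by recursion
   with fuel; fuel W is always sufficient since back-off values are < W. *)
Fixpoint bcast_fuel (E : finType) (C : rel E) (W : nat) (b : {ffun E -> 'I_W})
    (n : nat) (i : E) : bool :=
  if n is n'.+1 then
    ~~ [exists j, [&& C i j, (b j < b i)%N & bcast_fuel C b n' j]]
  else true.

Definition bcast (E : finType) (C : rel E) (W : nat) (b : {ffun E -> 'I_W})
    (i : E) : bool := bcast_fuel C b W i.

Definition zdec (E : finType) (C : rel E) (W : nat) (b : {ffun E -> 'I_W})
    (i : E) : bool :=
  bcast C b i && ~~ [exists j, [&& C i j, bcast C b j & (b j == b i :> nat)]].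

Definition link_trans (R : realType) (E M : finType) (C : rel E)
    (Q Z : M -> E -> R) (z : bool) (x : {ffun E -> bool}) (i : E) (xi' : bool) : R :=
  if z then
    (if [exists j, C i j && x j] then (xi' == false)%:R
     else if xi' then pact Q Z i else 1 - pact Q Z i)
  else (xi' == x i)%:R.

(* Transition matrix of the Markov chain induced on link schedules at the
   super-slot boundaries (weights held fixed): back-offs are i.i.d. uniform
   on {0,...,W-1}, and given the decision schedule z the links update
   independently. *)
Definition csma_kernel (R : realType) (E M : finType) (C : rel E) (W : nat)
    (Q Z : M -> E -> R) (x y : {ffun E -> bool}) : R :=
  \sum_(b : {ffun E -> 'I_W})
     (W ^ #|E|)%:R^-1 * \prod_(i : E) link_trans C Q Z (zdec C b i) x i (y i).

Definition stationary (R : realType) (E M : finType) (C : rel E) (W : nat)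
    (Q Z : M -> E -> R) (pi : {ffun E -> bool} -> R) : Prop :=
  [/\ forall x, 0 <= pi x,
      \sum_x pi x = 1,
      forall x, ~~ feasible_x C x -> pi x = 0
    & forall y, \sum_x pi x * csma_kernel C W Q Z x y = pi y].

(* service decision of the scheduler: an active link serves the type
   sel i, where sel i maximizes Q_mi + Z_mi *)
Definition sched_mu (E M : finType) (sel : E -> M) (x : {ffun E -> bool})
    : {ffun M * E -> bool} :=
  [ffun mi : M * E => x mi.2 && (mi.1 == sel mi.2)].

(* Main.v *)
Require Import Defs.
From mathcomp Require Import all_boot all_order all_algebra.
From mathcomp Require Import all_classical all_reals all_analysis.
From mathcomp Require Import ring lra zify.
Import Order.TTheory GRing.Theory Num.Theory.
Local Open Scope ring_scope.

Section Csma.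
Variables (R : realType) (E M : finType) (C : rel E)
    (Q Z : M -> E -> R) (W : nat) (sel : E -> M).
Hypotheses (Csym : symmetric C) (Cirr : irreflexive C) (W2 : (2 <= W)%N).

Lemma pact_gt0 i : 0 < pact Q Z i.
Proof. by rewrite /pact divr_gt0 // ?expR_gt0 // addr_gt0 // expR_gt0. Qed.

Lemma pact_lt1 i : pact Q Z i < 1.
Proof.
rewrite /pact ltr_pdivrMr ?mul1r ?addr_gt0 ?expR_gt0 //.
by rewrite ltrDr.
Qed.

Lemma lt_ge0 z x i v : 0 <= link_trans C Q Z z x i v.
Proof.
rewrite /link_trans; case: z; last exact: ler0n.
case: ifP => _; first exact: ler0n.
case: v; [exact: ltW (pact_gt0 i)| by rewrite subr_ge0 ltW // pact_lt1].
Qed.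

Lemma lt_sum z x i : link_trans C Q Z z x i true + link_trans C Q Z z x i false = 1.
Proof.
rewrite /link_trans; case: z.
  by case: ifP => _ //=; [rewrite add0r | rewrite addrC subrK].
by case: (x i); rewrite /= ?addr0 ?add0r.
Qed.

Definition K := csma_kernel C W Q Z.

Lemma K_ge0 x y : 0 <= K x y.
Proof.
apply: sumr_ge0 => b _; apply: mulr_ge0; first by rewrite invr_ge0 ler0n.
by apply: prodr_ge0 => i _; apply: lt_ge0.
Qed.

Lemma K_row x : \sum_y K x y = 1.
Proof.
rewrite /K /csma_kernel exchange_big /=.
rewrite (eq_bigr (fun _ => (W ^ #|E|)%:R^-1)); last first.
  move=> b _; rewrite -mulr_sumr.
  rewrite -(bigA_distr_bigA (fun i v => link_trans C Q Z (zdec C b i) x i v)) /=.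
  rewrite big1 ?mulr1 // => i _; by rewrite big_bool /= lt_sum.
rewrite sumr_const card_ffun card_ord -[_ *+ _]mulr_natr mulVf //.
by rewrite pnatr_eq0 -lt0n expn_gt0 (ltnW W2).
Qed.


Lemma bcast_stable (b : {ffun E -> 'I_W}) k : forall j, (b j < k)%N ->
  forall n m, (b j < n)%N -> (b j < m)%N -> bcast_fuel C b n j = bcast_fuel C b m j.
Proof.
elim: k => [|k IH] j //= hk [|n] [|m] //= hn hm.
congr (~~ _); apply: eq_existsb => l.
case: (C j l) => //=; case hl: (b l < b j)%N => //=.
apply: IH; apply: (leq_trans hl); rewrite -ltnS //.
Qed.

Lemma zdec_indep (b : {ffun E -> 'I_W}) i j : C i j -> zdec C b i -> zdec C b j -> False.
Proof.
move: i j.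
suff H : forall i j, C i j -> (b j < b i)%N -> zdec C b i -> zdec C b j -> False.
  move=> i j Cij zi zj.
  have [lt|lt|eq] := ltngtP (b j) (b i).
  - exact: (H i j Cij lt zi zj).
  - by apply: (H j i) => //; rewrite Csym.
  - move: zi; rewrite /zdec => /andP [_ /existsP nE]; apply: nE; exists j.
    by rewrite Cij eq eqxx andbT; move: zj => /andP [-> _].
move=> i j Cij lt /andP [bi _] /andP [bj _].
move: bi; rewrite /bcast.
have -> : bcast_fuel C b W i = bcast_fuel C b W.-1.+1 i by rewrite prednK // ltnW.
move=> /= /existsP; apply; exists j; rewrite Cij lt /=.
move: bj; rewrite /bcast (@bcast_stable b W j (ltn_ord _) W W.-1) //.
have := ltn_ord (b i); move: lt W2; clear; lia.
Qed.

Definition fw (v : bool) i : R := if v then expR (weight Q Z i) else 1.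
Definition g (x : {ffun E -> bool}) : R :=
  (feasible_x C x)%:R * \prod_i fw (x i) i.

Lemma feasP (x : {ffun E -> bool}) : reflect (forall i j, C i j -> ~~ (x i && x j)) (feasible_x C x).
Proof.
apply: (iffP forallP) => [H i j Cij | H i].
  by have /forallP/(_ j)/implyP := H i; apply.
by apply/forallP => j; apply/implyP; apply: H.
Qed.

Lemma prod_zero (b : {ffun E -> 'I_W}) x y :
  feasible_x C x -> ~~ feasible_x C y ->
  (forall j, ~~ zdec C b j -> y j = x j) ->
  \prod_i link_trans C Q Z (zdec C b i) x i (y i) = 0.
Proof.
move=> fx fy H.
have [i [j [Cij yi yj]]] : exists i j, [/\ C i j, y i & y j].
  apply/not_existsP => nE; move/negP: fy; apply; apply/feasP => i j Cij.
  apply/negP => /andP [yi yj]; apply: (nE i); by exists j; split.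
suff: exists2 k, true & link_trans C Q Z (zdec C b k) x k (y k) == 0.
  by move/prodf_eq0/eqP.
have Hx : forall k, (k = i \/ k = j) -> ~~ zdec C b k -> x k.
  by move=> k [->|->] zk; rewrite -H.
have fxij := feasP x fx i j Cij.
case zi: (zdec C b i); case zj: (zdec C b j).
- by exfalso; apply: (@zdec_indep b i j Cij); rewrite ?zi ?zj.
- exists i => //; rewrite /link_trans zi yi.
  have -> : [exists k, C i k && x k].
    have xj : x j by apply: Hx; [right | rewrite zj].
    by apply/existsP; exists j; rewrite Cij xj.
  by [].
- exists j => //; rewrite /link_trans zj yj.
  have -> : [exists k, C j k && x k].
    have xi : x i by apply: Hx; [left | rewrite zi].
    by apply/existsP; exists i; rewrite Csym Cij xi.
  by [].
- have xi : x i by apply: Hx; [left | rewrite zi].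
  have xj : x j by apply: Hx; [right | rewrite zj].
  by move: fxij; rewrite xi xj.
Qed.

Lemma pact_id i : pact Q Z i = expR (weight Q Z i) * (1 - pact Q Z i).
Proof.
rewrite /pact; set e := expR _.
have h : 1 + e != 0 by rewrite gt_eqF // addr_gt0 // expR_gt0.
by field.
Qed.

Lemma db_link (b : {ffun E -> 'I_W}) x y i :
  feasible_x C x -> feasible_x C y ->
  (forall j, ~~ zdec C b j -> y j = x j) ->
  fw (x i) i * link_trans C Q Z (zdec C b i) x i (y i) =
  fw (y i) i * link_trans C Q Z (zdec C b i) y i (x i).
Proof.
move=> fx fy H; rewrite /link_trans.
case zi: (zdec C b i); last by rewrite H ?zi.
have eqA : [exists j, C i j && x j] = [exists j, C i j && y j].
  apply: eq_existsb => j; case Cij: (C i j) => //=; rewrite H //.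
  by apply/negP => zj; apply: (@zdec_indep b i j Cij).
rewrite -eqA; case: ifP => A.
  have xi0 : forall z : {ffun E -> bool}, feasible_x C z ->
      [exists j, C i j && z j] -> z i = false.
    move=> z fz /existsP [j /andP [Cij zj]].
    by have := feasP z fz i j Cij; rewrite zj andbT => /negbTE.
  by rewrite xi0 // (xi0 y) // -eqA.
by case: (x i); case: (y i); rewrite /fw /= ?mul1r ?mulr1 // -pact_id.
Qed.

Lemma db x y : g x * K x y = g y * K y x.
Proof.
rewrite /K /csma_kernel !mulr_sumr; apply: eq_bigr => b _.
rewrite mulrCA [g y * _]mulrCA; congr (_ * _).
have [[j /andP [zj yj]] | Hn] :=
  pselect (exists j, ~~ zdec C b j && (y j != x j)).
  have z1 : \prod_i link_trans C Q Z (zdec C b i) x i (y i) = 0.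
    apply/eqP/prodf_eq0; exists j => //.
    by rewrite /link_trans (negbTE zj) (negbTE yj).
  have z2 : \prod_i link_trans C Q Z (zdec C b i) y i (x i) = 0.
    apply/eqP/prodf_eq0; exists j => //.
    by rewrite /link_trans (negbTE zj) [x j == _]eq_sym (negbTE yj).
  by rewrite z1 z2 !mulr0.
have H : forall j, ~~ zdec C b j -> y j = x j.
  move=> j zj; apply/eqP; apply/negPn/negP => yj; apply: Hn; exists j.
  by rewrite zj yj.
have H' : forall j, ~~ zdec C b j -> x j = y j by move=> j /H ->.
rewrite /g; case fx: (feasible_x C x); case fy: (feasible_x C y).
- rewrite !mul1r -!big_split /=; apply: eq_bigr => i _.
  exact: db_link.
- by rewrite (@prod_zero b x y) ?fx ?fy // /= !mulr0 !mul0r.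
- by rewrite (@prod_zero b y x) ?fx ?fy // /= !mulr0 !mul0r.
- by rewrite !mul0r.
Qed.

Lemma lt_gt0 (z : bool) (x : {ffun E -> bool}) j v :
  (z -> [exists k, C j k && x k] -> v = false) -> (~~ z -> v = x j) ->
  0 < link_trans C Q Z z x j v.
Proof.
rewrite /link_trans; case: z => /= H1 H2.
  case: ifP => A; first by rewrite H1.
  by case: (v); [exact: pact_gt0 | rewrite subr_gt0 pact_lt1].
by rewrite H2 // eqxx.
Qed.

Lemma toggle (u u' : {ffun E -> bool}) i :
  feasible_x C u -> feasible_x C u' -> (forall j, j != i -> u' j = u j) ->
  0 < K u u'.
Proof.
move=> fu fu' H.
pose o0 : 'I_W := Ordinal (ltnW W2).
pose o1 : 'I_W := Ordinal W2.
pose b0 : {ffun E -> 'I_W} := [ffun j => if j == i then o0 else o1].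
have zi : zdec C b0 i.
  rewrite /zdec /bcast.
  have -> : bcast_fuel C b0 W i = bcast_fuel C b0 W.-1.+1 i
    by rewrite prednK // ltnW.
  apply/andP; split.
    by apply/negP => /existsP [k /and3P [_ + _]]; rewrite !ffunE eqxx ltn0.
  apply/negP => /existsP [k /and3P [Cik _]].
  rewrite !ffunE eqxx.
  have -> : (k == i) = false by apply/negP => /eqP ki; move: Cik; rewrite ki Cirr.
  by [].
rewrite /K /csma_kernel (bigD1 b0) //=.
apply: (@lt_le_trans _ _ ((W ^ #|E|)%:R^-1 * \prod_i0 link_trans C Q Z (zdec C b0 i0) u i0 (u' i0))).
  apply: mulr_gt0; first by rewrite invr_gt0 ltr0n expn_gt0 (ltnW W2).
  apply: prodr_gt0 => j _; apply: lt_gt0.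
    move=> zj /existsP [k /andP [Cjk uk]].
    have [ji|ji] := eqVneq j i.
      rewrite ji in Cjk *.
      have u'k : u' k by rewrite H // ; apply/negP => /eqP ki; move: Cjk; rewrite ki Cirr.
      by have := feasP u' fu' i k Cjk; rewrite u'k andbT => /negbTE.
    by rewrite H //; have := feasP u fu j k Cjk; rewrite uk andbT => /negbTE.
  move=> zj; apply: H; apply/negP => /eqP ji; move: zj; by rewrite ji zi.
rewrite lerDl; apply: sumr_ge0 => b _; apply: mulr_ge0; first by rewrite invr_ge0 ler0n.
by apply: prodr_ge0 => j _; apply: lt_ge0.
Qed.

Lemma g_gt0 x : feasible_x C x -> 0 < g x.
Proof.
move=> fx; rewrite /g fx mul1r; apply: prodr_gt0 => i _.
by rewrite /fw; case: (x i); [exact: expR_gt0 | exact: ltr01].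
Qed.

Lemma g_inf x : ~~ feasible_x C x -> g x = 0.
Proof. by move/negbTE => fx; rewrite /g fx mul0r. Qed.

Lemma off_feas (x : {ffun E -> bool}) a :
  feasible_x C x -> feasible_x C [ffun j => if j == a then false else x j].
Proof.
move=> fx; apply/feasP => i j Cij; rewrite !ffunE.
have := feasP x fx i j Cij.
by case: (i == a); case: (j == a); rewrite ?andbF.
Qed.

Lemma pi_gibbs pi : stationary C W Q Z pi -> exists c, forall x, pi x = c * g x.
Proof.
case=> pi0 pi1 piinf pist.
pose h x := pi x / g x.
have pih x : pi x = h x * g x.
  case fx: (feasible_x C x).
    by rewrite /h divfK // gt_eqF // g_gt0.
  by rewrite g_inf ?fx // mulr0 piinf ?fx.
have harm y : feasible_x C y -> h y = \sum_x K y x * h x.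
  move=> fy; apply: (mulIf (negbT (gt_eqF (@g_gt0 y fy)))).
  rewrite -pih -{1}pist mulr_suml; apply: eq_bigr => x _.
  rewrite pih -mulrA; change (csma_kernel C W Q Z x y) with (K x y); rewrite db; ring.
pose x0 : {ffun E -> bool} := [ffun _ => false].
have fx0 : feasible_x C x0 by apply/feasP => i j _; rewrite ffunE.
have [xm fxm maxh] : exists2 xm, feasible_x C xm & forall x, feasible_x C x -> h x <= h xm.
  by case: (arg_maxP h fx0) => xm fxm H; exists xm.
set Mx := h xm in maxh *.
have hle x : h x <= Mx.
  case fx: (feasible_x C x); first exact: maxh.
  rewrite /h piinf ?fx // mul0r /Mx /h divr_ge0 //; exact: ltW (@g_gt0 xm fxm).
have clos u v : feasible_x C u -> h u = Mx -> 0 < K u v -> h v = Mx.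
  move=> fu hu Kuv.
  have S : \sum_x K u x * (Mx - h x) = 0.
    under eq_bigr do rewrite mulrBr.
    by rewrite sumrB -mulr_suml K_row mul1r -harm // hu subrr.
  have nn : forall x, true -> 0 <= K u x * (Mx - h x).
    by move=> x _; rewrite mulr_ge0 ?K_ge0 // subr_ge0 hle.
  have := @psumr_eq0P _ _ _ _ nn S v isT.
  move/eqP; rewrite mulf_eq0 => /orP [/eqP K0|]; first by move: Kuv; rewrite K0 ltxx.
  by rewrite subr_eq0 => /eqP.
have down : forall (s : seq E) y, feasible_x C y -> h y = Mx -> (forall j, y j -> j \in s) -> h x0 = Mx.
  elim=> [|a s IH] y fy hy sub.
    suff -> : x0 = y by [].
    apply/ffunP => j; rewrite ffunE; case yj: (y j) => //.
    by have := sub j yj.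
  pose y' : {ffun E -> bool} := [ffun j => if j == a then false else y j].
  have fy' : feasible_x C y' by apply: off_feas.
  have hy' : h y' = Mx.
    apply: (clos y) => //; apply: (@toggle _ _ a) => // j ja.
    by rewrite ffunE (negbTE ja).
  apply: (IH y') => // j; rewrite ffunE; case: eqP => // /eqP ja yj.
  by have := sub j yj; rewrite inE (negbTE ja).
have hx0 : h x0 = Mx by apply: (down (enum E) xm) => // j _; rewrite mem_enum.
have up : forall (s : seq E) x, feasible_x C x -> (forall j, x j -> j \in s) -> h x = Mx.
  elim=> [|a s IH] x fx sub.
    suff -> : x = x0 by [].
    apply/ffunP => j; rewrite ffunE; case xj: (x j) => //.
    by have := sub j xj.
  pose x' : {ffun E -> bool} := [ffun j => if j == a then false else x j].
  have fx' : feasible_x C x' by apply: off_feas.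
  have hx' : h x' = Mx.
    apply: (IH x') => // j; rewrite ffunE; case: eqP => // /eqP ja xj.
    by have := sub j xj; rewrite inE (negbTE ja).
  apply: (clos x') => //; apply: (@toggle _ _ a) => // j ja.
  by rewrite ffunE (negbTE ja).
exists Mx => x; rewrite pih.
case fx: (feasible_x C x).
  by rewrite (up (enum E) x) // => j _; rewrite mem_enum.
by rewrite g_inf ?fx // !mulr0.
Qed.

End Csma.

Section Phi.
Variables (R : realType) (E M : finType) (C : rel E)
    (Q Z : M -> E -> R) (sel : E -> M).
Hypotheses (Q0 : forall m i, 0 <= Q m i) (Z0 : forall m i, 0 <= Z m i)
  (Hsel : forall i m, Q m i + Z m i <= Q (sel i) i + Z (sel i) i).

Lemma weight_sel i : weight Q Z i = Q (sel i) i + Z (sel i) i.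
Proof.
apply/eqP; rewrite eq_le; apply/andP; split.
  by apply: bigmax_le => [|m _]; [rewrite addr_ge0 | exact: Hsel].
exact: (le_bigmax _ (fun m => Q m i + Z m i) (sel i)).
Qed.

Lemma Phi_sched x : Phi3 Q Z (sched_mu sel x) = \sum_i (x i)%:R * weight Q Z i.
Proof.
rewrite /Phi3 exchange_big /=; apply: eq_bigr => i _.
rewrite (bigD1 (sel i)) //= ffunE /= eqxx andbT big1 ?addr0 ?weight_sel //.
by move=> m /negbTE mi; rewrite ffunE /= mi andbF mul0r.
Qed.

Lemma g_Phi x : @g R E M C Q Z x = (feasible_x C x)%:R * expR (Phi3 Q Z (sched_mu sel x)).
Proof.
rewrite /g Phi_sched expR_sum; congr (_ * _); apply: eq_bigr => i _.
by rewrite /fw; case: (x i); rewrite ?mul1r ?mul0r ?expR0.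
Qed.

Lemma Phi_le x mu : feasible C x mu -> Phi3 Q Z mu <= Phi3 Q Z (sched_mu sel x).
Proof.
case/andP => _ /forallP Hs.
rewrite Phi_sched /Phi3 exchange_big /=; apply: ler_sum => i _.
have <- : (\sum_m (mu (m, i) : nat))%N%:R = (x i)%:R :> R by rewrite (eqP (Hs i)).
rewrite natr_sum mulr_suml; apply: ler_sum => m _.
by apply: ler_wpM2l; [exact: ler0n | rewrite weight_sel Hsel].
Qed.

Lemma Phi_ge0 x : 0 <= Phi3 Q Z (sched_mu sel x).
Proof.
rewrite Phi_sched; apply: sumr_ge0 => i _; apply: mulr_ge0; first exact: ler0n.
by rewrite weight_sel addr_ge0.
Qed.

End Phi.

Arguments g_gt0 {R E M C Q Z x}.
Arguments g_inf {R E M C Q Z x}.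
Arguments g_Phi {R E M C Q Z sel} Q0 Z0 Hsel x.
Arguments Phi_le {R E M C Q Z sel} Q0 Z0 Hsel {x mu}.
Arguments Phi_ge0 {R E M Q Z sel} Q0 Z0 Hsel x.

Theorem theorem3 (R : realType) (E M : finType) (C : rel E)
    (Q Z : M -> E -> R) (W : nat) (sel : E -> M)
    (pi : {ffun E -> bool} -> R) (theta delta : R) :
  symmetric C -> irreflexive C ->
  (2 <= W)%N ->
  (forall m i, 0 <= Q m i) -> (forall m i, 0 <= Z m i) ->
  (forall i m, Q m i + Z m i <= Q (sel i) i + Z (sel i) i) ->
  stationary C W Q Z pi ->
  0 < theta < 1 -> 0 < delta < 1 ->
  Phi3star C Q Z >= theta^-1 * (#|E|%:R * ln 2 + ln delta^-1) ->
  \sum_(x | Phi3 Q Z (sched_mu sel x) >= (1 - theta) * Phi3star C Q Z) pi x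
    > 1 - delta.
Proof.
move=> Csym Cirr W2 Q0 Z0 Hsel st /andP [th0 th1] /andP [d0 d1] Hphi.
have [c pic] := @pi_gibbs R E M C Q Z W Csym Cirr W2 pi st.
have pi1 : \sum_x pi x = 1 by case: st.
set Ps := Phi3star C Q Z in Hphi *.
pose Ph x := Phi3 Q Z (sched_mu sel x).
pose gg := @g R E M C Q Z.
pose x0 : {ffun E -> bool} := [ffun _ => false].
have fx0 : feasible_x C x0 by apply/feasP => i j _; rewrite ffunE.
have [xs fxs maxs] : exists2 xs, feasible_x C xs & forall x, feasible_x C x -> Ph x <= Ph xs.
  by case: (arg_maxP Ph fx0) => xs fxs H; exists xs.
have Psle : Ps <= Ph xs.
  apply/bigmax_leP; split; first exact: (Phi_ge0 Q0 Z0 Hsel).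
  move=> p fp; apply: (le_trans (Phi_le Q0 Z0 Hsel fp)).
  by apply: maxs; case/andP: fp.
have ln2 : 0 < ln (2 : R) by rewrite ln_gt0 // ltr1n.
have lnd : 0 < ln (delta^-1) by rewrite ln_gt0 // invf_gt1.
set N := #|E| in Hphi *.
have X0 : 0 < N%:R * ln 2 + ln delta^-1 by rewrite ltr_wpDl // mulr_ge0 // ?ler0n ltW.
have XP : N%:R * ln 2 + ln delta^-1 <= theta * Ps.
  rewrite -[X in X <= _](mulVKf (negbT (gt_eqF th0))) ler_pM2l //.
have Ps0 : 0 < Ps.
  apply: (lt_le_trans _ Hphi); apply: mulr_gt0 => //; by rewrite invr_gt0.
have e2 : 2 ^+ N <= delta * expR (theta * Ps).
  have := XP; rewrite -ler_expR expRD expRM_natl lnK ?lnK ?posrE ?invr_gt0 //.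
  by rewrite ler_pdivrMr // mulrC.
pose G := \sum_x gg x.
have ggxs : expR Ps <= G.
  apply: (le_trans _ (_ : gg xs <= G)).
    by rewrite /gg (g_Phi Q0 Z0 Hsel) fxs mul1r ler_expR.
  rewrite /G (bigD1 xs) //= lerDl; apply: sumr_ge0 => x _.
  case fx: (feasible_x C x); first exact: ltW (g_gt0 fx).
  by rewrite /gg g_inf ?fx.
have G0 : 0 < G by apply: (lt_le_trans (expR_gt0 _) ggxs).
have cG : c * G = 1.
  by rewrite -pi1 /G mulr_sumr; apply: eq_bigr => x _; rewrite pic.
set e1 := expR ((1 - theta) * Ps).
have xsgood : (1 - theta) * Ps <= Ph xs.
  by apply: (le_trans _ Psle); nra.
set good := (fun x => (1 - theta) * Ps <= Phi3 Q Z (sched_mu sel x)).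
have B1 : \sum_(x | ~~ good x) gg x <= \sum_(x | x != xs) e1.
  rewrite big_mkcond [X in _ <= X]big_mkcond /=; apply: ler_sum => x _.
  case: ifP => bx; case: ifP => nx.
  - case fx: (feasible_x C x); last by rewrite /gg g_inf ?fx // ltW // expR_gt0.
    rewrite /gg (g_Phi Q0 Z0 Hsel) fx mul1r ler_expR ltW //.
    by rewrite ltNge.
  - by move/negbFE: nx => /eqP xxs; move: bx; rewrite xxs /good xsgood.
  - exact: ltW (expR_gt0 _).
  - by [].
have B2 : \sum_(x | x != xs) e1 = ((2 ^ N).-1)%:R * e1.
  by rewrite sumr_const cardC1 card_ffun card_bool mulr_natl.
have B3 : ((2 ^ N).-1)%:R * e1 < 2 ^+ N * e1.
  rewrite ltr_pM2r ?expR_gt0 // -natrX ltr_nat.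
  by rewrite prednK ?expn_gt0 // ltnSn.
have B4 : 2 ^+ N * e1 <= delta * G.
  apply: (le_trans (ler_wpM2r (ltW (expR_gt0 _)) e2)).
  rewrite -mulrA -expRD; apply: ler_wpM2l; first exact: ltW.
  by apply: (le_trans _ ggxs); rewrite ler_expR; lra.
have Bad : \sum_(x | ~~ good x) gg x < delta * G.
  by apply: (le_lt_trans B1); rewrite B2; apply: (lt_le_trans B3).
have split1 : \sum_(x | good x) pi x + \sum_(x | ~~ good x) pi x = 1.
  by rewrite -pi1 [in RHS](bigID good).
have badpi : \sum_(x | ~~ good x) pi x = c * \sum_(x | ~~ good x) gg x.
  by rewrite mulr_sumr; apply: eq_bigr => x _; rewrite pic.
have c0 : 0 < c.
  by nra.
have : c * \sum_(x | ~~ good x) gg x < delta.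
  by nra.
rewrite /good in split1 badpi *.
lra.
Qed.
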